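(* Two semifactor sets of a wide ACI-matrix over a field $\mathbb{F}$ cannot be disjoint.
   Context: Let $\mathbb{F}$ be a field. An ACI-matrix is a matrix with entries in $\mathbb{F}[x_1,\dots,x_k]$ whose entries are polynomials of degree at most one and such that no indeterminate appears in two different columns. It is wide if it has more columns than rows. A completion is an assignment of values in $\mathbb{F}$ to all indeterminates; $\mathrm{maxRank}(N)$ is the maximum rank of a completion. ACI-matrices (and blocks) of size $0\times q$ ($q>0$, wide degenerate), $p\times 0$ ($p>0$, tall degenerate) and $0\times0$ (void) are allowed. $N$ is FRmR if $\mathrm{maxRank}(N)=\mathrm{rows}(N)$, FCmR if $\mathrm{maxRank}(N)=\mathrm{cols}(N)$; by convention tall degenerate is FRmR, wide degenerate is FCmR, void is both. For an $m\times n$ block matrix $\begin{bmatrix} A & B\\ 0 & C\end{bmatrix}$ with lower-left $r\times s$ zero block, the zero block is Medium if $r+s=\max\{m,n\}$. For $F=\{f_1<\dots<f_s\}\subseteq\{1,\dots,n\}$ with complement $\{g_1<\dots<g_{n-s}\}$, $Q_F$ is the $n\times n$ permutation matrix such that $MQ_F$ has as columns $f_1,\dots,f_s,g_1,\dots,g_{n-s}$ of $M$ in that order. For an $m\times n$ ACI-matrix $M$, $F$ is a semifactor set of $M$ if there is a nonsingular constant $m\times m$ matrix $R$ with $RMQ_F=\begin{bmatrix} A & B\\ 0 & C\end{bmatrix}$, where $A$ has $\#F$ columns, the zero block is Medium, $A$ is FRmR and $C$ is FCmR. *)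

(* Defs.v *)
From HB Require Import structures.
From mathcomp Require Import all_boot all_order all_algebra.
Set Implicit Arguments. Unset Strict Implicit. Unset Printing Implicit Defensive.
Import GRing.Theory.
Local Open Scope ring_scope.

(* An m x n ACI-matrix over F in the indeterminates x_0,...,x_(k-1).
   Every entry is a polynomial of degree at most one, i.e. uniquely written as
   c + \sum_l a_l x_l ; we store the constant parts [aconst] and, for every
   indeterminate x_l, the matrix [acoef l] of its coefficients. *)
Record aci (F : fieldType) (k m n : nat) := ACI {
  aconst : 'M[F]_(m, n);
  acoef : 'I_k -> 'M[F]_(m, n) }.

Definition is_aci (F : fieldType) k m n (M : aci F k m n) : Prop :=
  forall (l : 'I_k) (i1 i2 : 'I_m) (j1 j2 : 'I_n),
    acoef M l i1 j1 != 0 -> acoef M l i2 j2 != 0 -> j1 = j2.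

Definition completion (F : fieldType) k m n (M : aci F k m n) (v : 'I_k -> F)
  : 'M[F]_(m, n) := aconst M + \sum_(l < k) v l *: acoef M l.

Definition is_maxRank (F : fieldType) k m n (M : aci F k m n) (r : nat) : Prop :=
  (exists v, \rank (completion M v) = r) /\
  (forall v, (\rank (completion M v) <= r)%N).

Definition FRmR (F : fieldType) k m n (M : aci F k m n) : Prop :=
  is_maxRank M m \/ n = 0%N.
Definition FCmR (F : fieldType) k m n (M : aci F k m n) : Prop :=
  is_maxRank M n \/ m = 0%N.

Definition aci_transform (F : fieldType) k m n (R : 'M[F]_m) (M : aci F k m n)
  (Q : 'M[F]_n) : aci F k m n :=
  ACI (R *m aconst M *m Q) (fun l => R *m acoef M l *m Q).

Definition aci_sub (F : fieldType) k m n p q (f : 'I_p -> 'I_m) (g : 'I_q -> 'I_n)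
  (M : aci F k m n) : aci F k p q :=
  ACI (mxsub f g (aconst M)) (fun l => mxsub f g (acoef M l)).

Definition col_order n (S : {set 'I_n}) (j : 'I_n) : 'I_n :=
  nth j (enum S ++ enum (~: S)) j.

Definition Q_F (F : fieldType) n (S : {set 'I_n}) : 'M[F]_n :=
  \matrix_(i, j) ((i == col_order S j)%:R : F).

Lemma card_set_ord_le n (S : {set 'I_n}) : (#|S| <= n)%N.
Proof. by rewrite -[X in (_ <= X)%N](card_ord n) max_card. Qed.

Lemma shift_ord_proof p n (j : 'I_(n - p)) : (p + j < n)%N.
Proof. by have := ltn_ord j; rewrite ltn_subRL. Qed.

Definition shift_ord p n (j : 'I_(n - p)) : 'I_n := Ordinal (shift_ord_proof j).

(* F is a semifactor set of M: R M Q_F = [A B; 0 C], with A of #F columns and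
   p rows, zero block of size (m - p) x #F which is Medium, A FRmR, C FCmR. *)
Definition semifactor (F : fieldType) k m n (M : aci F k m n) (S : {set 'I_n}) : Prop :=
  exists (R : 'M[F]_m) (p : nat) (hp : (p <= m)%N),
    R \in unitmx /\
    ((m - p) + #|S| = maxn m n)%N /\
    let N := aci_transform R M (Q_F F S) in
    (forall (i : 'I_(m - p)) (j : 'I_#|S|),
        aconst N (shift_ord i) (widen_ord (card_set_ord_le S) j) = 0 /\
        forall l, acoef N l (shift_ord i) (widen_ord (card_set_ord_le S) j) = 0) /\
    FRmR (aci_sub (widen_ord hp) (widen_ord (card_set_ord_le S)) N) /\
    FCmR (aci_sub (@shift_ord p m) (@shift_ord #|S| n) N).

(* Main.v *)
Require Import Defs.
From HB Require Import structures.
From mathcomp Require Import all_boot all_order all_algebra.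
From mathcomp Require Import zify.
Import GRing.Theory.
Local Open Scope ring_scope.

Lemma completion_transform (F : fieldType) k m n (R : 'M[F]_m) (M : aci F k m n) Q v :
  completion (aci_transform R M Q) v = R *m completion M v *m Q.
Proof.
rewrite /completion /= mulmxDr mulmxDl mulmx_sumr mulmx_suml; congr (_ + _).
by apply eq_bigr => l _; rewrite -scalemxAr -scalemxAl.
Qed.

Lemma completion_sub (F : fieldType) k m n p q (f : 'I_p -> 'I_m) (g : 'I_q -> 'I_n)
  (N : aci F k m n) v :
  completion (aci_sub f g N) v = mxsub f g (completion N v).
Proof.
apply/matrixP => i j; rewrite !mxE !summxE; congr (_ + _).
by apply eq_bigr => l _; rewrite !mxE.
Qed.

Lemma mulQ (F : fieldType) m n (X : 'M[F]_(m, n)) S :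
  X *m Q_F F S = colsub (col_order S) X.
Proof.
apply/matrixP => i j; rewrite /Q_F !mxE (bigD1 (col_order S j)) //= big1 ?addr0.
  by rewrite !mxE eqxx mulr1.
by move=> t ht; rewrite !mxE (negbTE ht) mulr0.
Qed.

Lemma colsub_mul (F : fieldType) m n p q (g : 'I_q -> 'I_p) (A : 'M[F]_(m, n)) B :
  colsub g (A *m B) = A *m colsub g B.
Proof. by apply/matrixP => i j; rewrite !mxE; apply eq_bigr => t _; rewrite !mxE. Qed.

Lemma rank_rowsub (F : fieldType) m n p (f : 'I_p -> 'I_m) (A : 'M[F]_(m, n)) :
  (\rank (rowsub f A) <= \rank A)%N.
Proof.
have -> : rowsub f A = (\matrix_(i, j) ((f i == j)%:R : F)) *m A.
  apply/matrixP => i j; rewrite !mxE (bigD1 (f i)) //= big1 ?addr0.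
    by rewrite !mxE eqxx mul1r.
  by move=> t ht; rewrite !mxE eq_sym (negbTE ht) mul0r.
exact: mxrankM_maxr.
Qed.

Lemma col_orderE n (S : {set 'I_n}) (j : 'I_n) x0 :
  col_order S j = nth x0 (enum S ++ enum (~: S)) j.
Proof.
by rewrite /col_order (set_nth_default x0) // size_cat -!cardE cardsC card_ord.
Qed.

Lemma col_order_in n (S : {set 'I_n}) (j : 'I_#|S|) :
  col_order S (widen_ord (card_set_ord_le S) j) \in S.
Proof.
rewrite (@col_orderE _ S _ (widen_ord (card_set_ord_le S) j)) nth_cat -cardE [(_ < _)%N]/= ltn_ord.
by rewrite -mem_enum; apply: mem_nth; rewrite -cardE; exact: (ltn_ord j).
Qed.

Lemma col_order_inj n (S : {set 'I_n}) :
  injective (fun j : 'I_#|S| => col_order S (widen_ord (card_set_ord_le S) j)).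
Proof.
move=> j1 j2 /=; rewrite !(@col_orderE _ S _ (widen_ord (card_set_ord_le S) j1)).
move/eqP; rewrite nth_uniq /=.
- by move/eqP => e; apply: val_inj.
- by rewrite size_cat -!cardE cardsC card_ord; exact: (leq_trans (ltn_ord j1) (card_set_ord_le S)).
- by rewrite size_cat -!cardE cardsC card_ord; exact: (leq_trans (ltn_ord j2) (card_set_ord_le S)).
rewrite cat_uniq !enum_uniq /= andbT; apply/hasPn => x.
by rewrite !mem_enum in_setC.
Qed.

Lemma col_order_idx n (S : {set 'I_n}) (c : 'I_n) :
  c \notin S -> (index c (enum (~: S)) < n - #|S|)%N.
Proof.
move=> hc; have e : (n - #|S| = #|~: S|)%N.
  by have := cardsC S; rewrite card_ord; lia.
by rewrite e cardE index_mem mem_enum in_setC.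
Qed.

Lemma col_order_shift n (S : {set 'I_n}) (c : 'I_n) (hc : c \notin S) :
  col_order S (shift_ord (Ordinal (@col_order_idx n S c hc))) = c.
Proof.
rewrite (@col_orderE _ S _ c) nth_cat /= -cardE ltnNge leq_addr /= addKn.
by rewrite nth_index // mem_enum in_setC.
Qed.

Theorem lemma5p2 (F : fieldType) (k m n : nat) (M : aci F k m n) :
  is_aci M -> (m < n)%N ->
  forall S1 S2 : {set 'I_n},
    semifactor M S1 -> semifactor M S2 -> ~~ [disjoint S1 & S2].
Proof.
move=> _ hmn S1 S2 [R1 [p1 [hp1 [hR1 [hmed1 H1]]]]] [R2 [p2 [hp2 [hR2 [hmed2 H2]]]]].
move: H1 H2 => [hz1 [hA1 hC1]] [hz2 [hA2 hC2]].
apply/negP => hdis.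
have hmaxn : maxn m n = n by apply/maxn_idPr; exact: ltnW.
rewrite hmaxn in hmed1 hmed2.
pose g := fun j : 'I_#|S2| => col_order S2 (widen_ord (card_set_ord_le S2) j).
have hnot : forall j, g j \notin S1.
  by move=> j; rewrite (disjointFl hdis) // col_order_in.
pose h := fun j => Ordinal (@col_order_idx _ S1 _ (hnot j)).
have hh : forall j, col_order S1 (shift_ord (h j)) = g j.
  by move=> j; exact: col_order_shift.
have hinj : injective h.
  move=> j1 j2 e; have := hh j1; rewrite e hh => e2.
  by apply: (@col_order_inj _ S2); rewrite /= -/(g j1) -/(g j2) e2.
have hS2pos : (0 < #|S2|)%N by lia.
case: hC1 => [[[v hv] _] | hm0]; last first.
  by have := ltn_ord (h (Ordinal hS2pos)); lia.
rewrite completion_sub completion_transform in hv.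
set X := completion M v in hv.
pose Y := colsub g X.
have rkY : (\rank Y <= p2)%N.
  have e2 : R2 *m Y = pid_mx p2 *m (R2 *m Y).
    apply/matrixP => i j; rewrite [RHS]mxE (bigD1 i) //= big1 ?addr0; last first.
      by move=> t ht; rewrite mxE (inj_eq val_inj) eq_sym (negbTE ht) /= mul0r.
    rewrite [pid_mx _ _ _]mxE eqxx /=; case: (ltnP i p2) => hi; first by rewrite mul1r.
    rewrite mul0r.
    have hi' : (i - p2 < m - p2)%N by have := ltn_ord i; lia.
    pose i' : 'I_(m - p2) := Ordinal hi'.
    have ei : shift_ord i' = i by apply: val_inj => /=; lia.
    have : (completion (aci_transform R2 M (Q_F F S2)) v) (shift_ord i')
              (widen_ord (card_set_ord_le S2) j) = 0.
      rewrite /completion mxE summxE (proj1 (hz2 i' j)) add0r big1 // => l _.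
      by rewrite mxE (proj2 (hz2 i' j) l) mulr0.
    by rewrite completion_transform mulQ ei -colsub_mul !mxE.
  apply: leq_trans (_ : (\rank (R2 *m Y) <= p2)%N).
    by rewrite -{1}(mulKmx hR2 Y); exact: mxrankM_maxr.
  rewrite e2; apply: leq_trans (mxrankM_maxl _ _) _.
  by rewrite rank_pid_mx.
pose C := mxsub (@shift_ord p1 m) (@shift_ord #|S1| n) (R1 *m X *m Q_F F S1).
pose P : 'M[F]_(n - #|S1|, #|S2|) := \matrix_(i, j) ((i == h j)%:R : F).
have eC : C *m P = rowsub (@shift_ord p1 m) (R1 *m Y).
  rewrite /C /Y -colsub_mul mulQ.
  apply/matrixP => i j; rewrite !mxE (bigD1 (h j)) //= big1 ?addr0.
    by rewrite !mxE eqxx mulr1 hh.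
  by move=> t ht; rewrite !mxE (negbTE ht) mulr0.
have rkP : #|S2| = \rank P.
  have ePP : P^T *m P = 1%:M.
    apply/matrixP => j1 j2; rewrite !mxE (bigD1 (h j1)) //= big1 ?addr0.
      by rewrite !mxE eqxx mul1r (inj_eq hinj).
    by move=> t ht; rewrite !mxE (negbTE ht) mul0r.
  apply/eqP; rewrite eqn_leq rank_leq_col andbT.
  by rewrite -{1}(mxrank1 F #|S2|) -ePP -(mxrank_tr P) mxrankM_maxl.
have rkCP : \rank (C *m P) = \rank P.
  rewrite -mxrank_tr trmx_mul mxrankMfree ?mxrank_tr //.
  by rewrite /row_free mxrank_tr hv.
have : (#|S2| <= p2)%N.
  rewrite rkP -rkCP eC; apply: leq_trans (rank_rowsub _ _ _ _ _ _) _.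
  by apply: leq_trans (mxrankM_maxr _ _) rkY.
lia.
Qed.
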